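(* Let $m\ge1$, let $\phi$ be the unique real root in $(1,2]$ of $\rho^m-\rho^{m-1}-1$, and set $p^-=\frac{\phi-1}{1+m(\phi-1)}$, $p^\bigstar=(m-1)p^-$, $p^+=1-mp^-$. For $\mathbf s\in\{+,-,\bigstar\}^n$ and $x\in\{+,-,\bigstar\}$ let $P^{(x)}_{\mathbf s}=\#\{k: s_k=x\}/n$. Then for every $\epsilon\in(0,1)$, $$\lim_{n\to\infty}\frac{\bigl|\{\mathbf s\in\mathcal S_n:\ |P^{(-)}_{\mathbf s}-p^-|\le\epsilon,\ |P^{(+)}_{\mathbf s}-p^+|\le\epsilon,\ |P^{(\bigstar)}_{\mathbf s}-p^\bigstar|\le\epsilon\}\bigr|}{N(n)}=1 .$$
   Context: Fix an integer $m\ge1$. Define integers $N(n)$ by $N(n)=1$ for $1-m\le n\le 0$ and $N(n)=N(n-1)+N(n-m)$ for $n\ge1$; write $\mathbb N_n=\{1,\dots,N(n)\}$ (so $\mathbb N_n=\{1\}$ for $n\le 0$, and $\mathbb N_{n-m}\subseteq\mathbb N_{n-1}$). Define vectors $\mathbf s_n^{(i)}\in\{+,-,\bigstar\}^n$ for $n\ge0$, $i\in\mathbb N_n$, recursively: $\mathbf s_0^{(1)}$ is the empty vector, and for $n\ge1$: $\mathbf s_n^{(j)}=(\mathbf s_{n-1}^{(j)},+)$ and $\mathbf s_n^{(j+N(n-1))}=(\mathbf s_{n-1}^{(j)},-)$ for $j\in\mathbb N_{n-m}$, while $\mathbf s_n^{(j)}=(\mathbf s_{n-1}^{(j)},\bigstar)$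 for $j\in\mathbb N_{n-1}\setminus\mathbb N_{n-m}$. Let $\mathcal S_n=\{\mathbf s_n^{(i)}:i\in\mathbb N_n\}$ for $n\ge1$. *)

(* Defs.v *)
From Stdlib Require Import Reals Lra Lia Arith List.
Import ListNotations.
Inductive sym : Type := Plus | Minus | Star.

Definition sym_eq_dec : forall x y : sym, {x = y} + {x <> y}.
Proof. decide equality. Defined.

Definition symvec_eq_dec : forall u v : list sym, {u = v} + {u <> v} :=
  list_eq_dec sym_eq_dec.

(* Nhist m k = [N(k); N(k-1); ...; N(0)].  Positions beyond the list stand
   for N(j) with j <= 0, i.e. value 1 (default of nth). *)
Fixpoint Nhist (m k : nat) : list nat :=
  match k with
  | O => [1%nat]
  | S k' => let h := Nhist m k' in
            (nth 0 h 1 + nth (m - 1) h 1)%nat :: h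
  end.

(* N(n) for n >= 0 : N(0)=1, N(n) = N(n-1) + N(n-m) with N(j)=1 for j <= 0. *)
Definition Nseq (m n : nat) : nat := nth 0 (Nhist m n) 1.

Definition Nshift (m n : nat) : nat := if (n <=? m)%nat then 1%nat else Nseq m (n - m).

Fixpoint mapi_aux {A B : Type} (f : nat -> A -> B) (i : nat) (l : list A) : list B :=
  match l with
  | [] => []
  | x :: l' => f i x :: mapi_aux f (S i) l'
  end.

(* Svec m n = [s_n^(1); ...; s_n^(N(n))], vectors written as lists of length n,
   (s, x) meaning s with x appended at the end.  Index j (1-based) corresponds
   to list position j-1. *)
Fixpoint Svec (m n : nat) : list (list sym) :=
  match n with
  | O => [ [] ]
  | S k =>
      let prev := Svec m k in
      let a := Nshift m (S k) in
      mapi_aux (fun j s => s ++ [if (j <? a)%nat then Plus else Star]) 0 prev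
      ++ map (fun s => s ++ [Minus]) (firstn a prev)
  end.

Open Scope R_scope.

Definition Pfreq (x : sym) (s : list sym) : R :=
  INR (count_occ sym_eq_dec s x) / INR (length s).

Definition good (pm pp ps eps : R) (s : list sym) : Prop :=
  Rabs (Pfreq Minus s - pm) <= eps /\
  Rabs (Pfreq Plus s - pp) <= eps /\
  Rabs (Pfreq Star s - ps) <= eps.

Definition good_dec (pm pp ps eps : R) (s : list sym) : bool :=
  if Rle_dec (Rabs (Pfreq Minus s - pm)) eps then
  if Rle_dec (Rabs (Pfreq Plus s - pp)) eps then
  if Rle_dec (Rabs (Pfreq Star s - ps)) eps then true else false else false else false.

(* cardinality of the set {s in S_n | good s} : distinct elements counted once *)
Definition count_good (m n : nat) (pm pp ps eps : R) : nat :=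
  length (nodup symvec_eq_dec (filter (good_dec pm pp ps eps) (Svec m n))).

(* Main.v *)
Require Import Defs.
From Stdlib Require Import Reals List Lia Lra.
From Coquelicot Require Coquelicot.
Import ListNotations.
Open Scope R_scope.

Module TiltM.
Import Coquelicot.Coquelicot.

Lemma tilt (k : nat) (phi b : R) : 1 < phi -> phi ^ (S k) = phi ^ k + 1 -> 0 < b ->
  b <> 1 / (phi ^ k + INR (S k)) ->
  exists u, (b > 1 / (phi ^ k + INR (S k)) -> u > 0) /\ (b < 1 / (phi ^ k + INR (S k)) -> u < 0) /\
    (phi * exp (b * u)) ^ k + exp u <= (phi * exp (b * u)) ^ (S k) /\ 1 <= phi * exp (b * u).
Proof.
  intros hphi hroot hb hne.
  set (g := fun u => (phi * exp (b * u)) ^ (S k) - (phi * exp (b * u)) ^ k - exp u).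
  set (l := b * (phi ^ k + INR (S k)) - 1).
  assert (Hpk : 0 < phi ^ k) by (apply pow_lt; lra).
  assert (HD : is_derive g 0 l).
  { unfold g. auto_derive. auto. rewrite Rmult_0_r, exp_0, !Rmult_1_r. unfold l.
    destruct k as [|k'].
    - simpl in *. assert (phi = 2) by lra. subst phi. lra.
    - simpl pred. change (match k' with 0%nat => 1 | S _ => INR k' + 1 end) with (INR (S k')) .
      simpl in hroot. change (phi ^ S k') with (phi * phi ^ k') in *.
      rewrite (S_INR (S k')). set (X := phi ^ k') in *. set (I := INR (S k')) in *.
      assert (E : phi * (phi * X) = phi * X + 1) by exact hroot.
      transitivity (b * ((I + 1) * (phi * (phi * X)) - I * (phi * X)) - 1). ring.
      rewrite E. ring. }
  apply is_derive_Reals in HD.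
  assert (HDp : 0 < phi ^ k + INR (S k)) by (pose proof (pos_INR (S k)); lra).
  assert (Hsign : b > 1 / (phi ^ k + INR (S k)) <-> l > 0).
  { unfold l. split; intro H.
    - apply (Rmult_lt_compat_r (phi ^ k + INR (S k))) in H; auto. field_simplify in H; lra.
    - apply (Rmult_lt_reg_r (phi ^ k + INR (S k))); auto. field_simplify; lra. }
  assert (Hsign2 : b < 1 / (phi ^ k + INR (S k)) <-> l < 0).
  { unfold l. split; intro H.
    - apply (Rmult_lt_compat_r (phi ^ k + INR (S k))) in H; auto. field_simplify in H; lra.
    - apply (Rmult_lt_reg_r (phi ^ k + INR (S k))); auto. field_simplify; lra. }
  assert (Hl : l <> 0).
  { intro H0. destruct (Rtotal_order b (1 / (phi ^ k + INR (S k)))) as [H|[H|H]].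
    apply Hsign2 in H; lra. contradiction. apply Hsign in H; lra. }
  assert (Hla : 0 < Rabs l / 2) by (pose proof (Rabs_pos_lt l Hl); lra).
  destruct (HD (Rabs l / 2) Hla) as [d Hd].
  assert (Hln : 0 < ln phi) by (rewrite <- ln_1; apply ln_increasing; lra).
  set (h0 := Rmin (d / 2) (ln phi / b / 2)).
  assert (Hh0 : 0 < h0).
  { unfold h0. apply Rmin_glb_lt. pose proof (cond_pos d); lra.
    apply Rmult_lt_0_compat; [apply Rdiv_lt_0_compat; auto|lra]. }
  assert (Hh1 : h0 <= d / 2) by apply Rmin_l.
  assert (Hh2 : h0 <= ln phi / b / 2) by apply Rmin_r.
  assert (g0 : g 0 = 0).
  { unfold g. rewrite Rmult_0_r, exp_0, Rmult_1_r, hroot. lra. }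
  assert (Hr : forall u, Rabs u <= h0 -> 1 <= phi * exp (b * u)).
  { intros u Hu. assert (b * u >= - ln phi).
    { assert (Rabs (b * u) <= b * h0) by (rewrite Rabs_mult, Rabs_pos_eq by lra; nra).
      assert (b * h0 <= ln phi / 2).
      { apply Rle_trans with (b * (ln phi / b / 2)). nra. right; field; lra. }
      apply Rabs_le_between in H. lra. }
    apply Rle_trans with (phi * exp (- ln phi)).
    rewrite exp_Ropp, exp_ln by lra. right; field; lra.
    apply Rmult_le_compat_l. lra. apply exp_le_3 || (destruct (Req_dec (b*u) (- ln phi)) as [E|E];
       [rewrite E; lra | left; apply exp_increasing; lra]). }
  assert (Hg : forall u, u <> 0 -> Rabs u <= h0 -> g u / u * u > 0 -> 
     (phi * exp (b * u)) ^ k + exp u <= (phi * exp (b * u)) ^ (S k)).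
  { intros u Hu _ H. replace (g u / u * u) with (g u) in H by (field; auto). unfold g in H. lra. }
  assert (Hdiff : forall u, u <> 0 -> Rabs u <= h0 -> Rabs (g u / u - l) < Rabs l / 2).
  { intros u Hu Hu2. specialize (Hd u Hu ltac:(pose proof (cond_pos d); lra)).
    rewrite Rplus_0_l, g0, Rminus_0_r in Hd. exact Hd. }
  destruct (Rtotal_order l 0) as [Hneg|[H0|Hpos]]; [|contradiction|].
  - exists (- h0). assert (Habs : Rabs (- h0) <= h0) by (rewrite Rabs_Ropp, Rabs_pos_eq; lra).
    repeat split.
    + intros H. apply Hsign in H. lra.
    + lra.
    + apply Hg; auto. lra. specialize (Hdiff (-h0) ltac:(lra) Habs).
      rewrite (Rabs_left l) in Hdiff by lra. apply Rabs_def2 in Hdiff.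
      assert (g (- h0) / - h0 < 0) by lra. nra.
    + apply Hr; auto.
  - exists h0. assert (Habs : Rabs h0 <= h0) by (rewrite Rabs_pos_eq; lra).
    repeat split.
    + lra.
    + intros H. apply Hsign2 in H. lra.
    + apply Hg; auto. lra. specialize (Hdiff h0 ltac:(lra) Habs).
      rewrite (Rabs_right l) in Hdiff by lra. apply Rabs_def2 in Hdiff.
      assert (g h0 / h0 > 0) by lra. nra.
    + apply Hr; auto.
Qed.

End TiltM.
Notation tilt := TiltM.tilt.

Lemma Nhist_nth m n i : nth i (Nhist m n) 1%nat = Nseq m (n - i).
Proof.
  revert i; induction n as [|n IH]; intros i.
  - destruct i as [|[|i]]; reflexivity.
  - destruct i as [|i].
    + reflexivity.
    + simpl. rewrite IH. reflexivity.
Qed.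

Lemma Nseq_S m n : (1 <= m)%nat -> Nseq m (S n) = (Nseq m n + Nseq m (S n - m))%nat.
Proof.
  intros hm. unfold Nseq at 1. simpl. rewrite !Nhist_nth.
  replace (n - 0)%nat with n by lia. replace (n - (m-1))%nat with (S n - m)%nat by lia.
  reflexivity.
Qed.

Lemma Nseq_pos m n : (1 <= m)%nat -> (1 <= Nseq m n)%nat.
Proof.
  intros hm; induction n. reflexivity. rewrite Nseq_S; lia.
Qed.

Lemma Nseq_mono m a b : (1 <= m)%nat -> (a <= b)%nat -> (Nseq m a <= Nseq m b)%nat.
Proof.
  intros hm H; induction H. lia. rewrite Nseq_S; lia.
Qed.

Lemma mapi_len {A B} (f : nat -> A -> B) i l : length (mapi_aux f i l) = length l.
Proof. revert i; induction l; simpl; auto. Qed.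

Lemma mapi_nth {A B} (f : nat -> A -> B) i l j d d' :
  (j < length l)%nat -> nth j (mapi_aux f i l) d = f (i + j)%nat (nth j l d').
Proof.
  revert i j; induction l as [|x l IH]; intros i j H; simpl in *. lia.
  destruct j. f_equal; lia. rewrite (IH (S i) j) by lia. f_equal; lia.
Qed.

Lemma Nshift_eq m n : Nshift m n = Nseq m (n - m).
Proof.
  unfold Nshift. destruct (n <=? m)%nat eqn:E; auto.
  apply Nat.leb_le in E. replace (n - m)%nat with 0%nat by lia. reflexivity.
Qed.

Lemma Svec_len m n : (1 <= m)%nat -> length (Svec m n) = Nseq m n.
Proof.
  intros hm; induction n. reflexivity.
  simpl. rewrite length_app, mapi_len, length_map, length_firstn, IHn, Nseq_S, Nshift_eq by lia.
  pose proof (Nseq_mono m (S n - m) n hm ltac:(lia)). lia.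
Qed.


Definition pstep (m : nat) (p : nat) (x : sym) : nat :=
  match x with Minus => (m - 1)%nat | Star => (p - 1)%nat | Plus => p end.
Definition pend m (s : list sym) : nat := fold_left (pstep m) s 0%nat.

Lemma pend_app m s x : pend m (s ++ [x]) = pstep m (pend m s) x.
Proof. unfold pend. rewrite fold_left_app. reflexivity. Qed.

Definition cnt x s := count_occ sym_eq_dec s x.

Lemma cnt_app x s y : cnt x (s ++ [y]) = (cnt x s + if sym_eq_dec y x then 1 else 0)%nat.
Proof. unfold cnt. rewrite count_occ_app. simpl. destruct sym_eq_dec; lia. Qed.

Lemma cnt_same x s : cnt x (s ++ [x]) = S (cnt x s).
Proof. rewrite cnt_app. destruct sym_eq_dec; [lia|congruence]. Qed.
Lemma cnt_diff x y s : y <> x -> cnt x (s ++ [y]) = cnt x s.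
Proof. intros. rewrite cnt_app. destruct sym_eq_dec; [congruence|lia]. Qed.

Lemma Svec_nth_lo m n j : (1 <= m)%nat -> (j < Nseq m n)%nat ->
  nth j (Svec m (S n)) [] = nth j (Svec m n) [] ++
     [if (j <? Nseq m (S n - m))%nat then Plus else Star].
Proof.
  intros hm hj. simpl. rewrite app_nth1 by (rewrite mapi_len, Svec_len; lia).
  rewrite (mapi_nth _ _ _ _ _ []) by (rewrite Svec_len; lia).
  rewrite Nshift_eq. reflexivity.
Qed.

Lemma map_nth' {A B} (f : A -> B) l j d d' : (j < length l)%nat ->
  nth j (map f l) d = f (nth j l d').
Proof.
  intros H. rewrite (nth_indep _ d (f d')) by (rewrite length_map; lia). apply map_nth.
Qed.

Lemma Svec_nth_hi m n j : (1 <= m)%nat -> (j < Nseq m (S n - m))%nat ->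
  nth (Nseq m n + j) (Svec m (S n)) [] = nth j (Svec m n) [] ++ [Minus].
Proof.
  intros hm hj. simpl. rewrite app_nth2 by (rewrite mapi_len, Svec_len; lia).
  rewrite mapi_len, Svec_len by lia. replace (Nseq m n + j - Nseq m n)%nat with j by lia.
  rewrite (map_nth' _ _ _ _ []).
  2:{ rewrite length_firstn, Nshift_eq. pose proof (Nseq_mono m (S n - m) n hm ltac:(lia)).
      rewrite Svec_len; lia. }
  rewrite nth_firstn, Nshift_eq.
  destruct (j <? Nseq m (S n - m))%nat eqn:E. reflexivity. apply Nat.ltb_ge in E; lia.
Qed.

Lemma Inv m n : (1 <= m)%nat -> forall j, (j < Nseq m n)%nat ->
  let s := nth j (Svec m n) [] in
  (forall r, (pend m s <= r)%nat <-> (j < Nseq m (n + 1 + r - m))%nat) /\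
  (cnt Star s + pend m s = (m - 1) * cnt Minus s)%nat /\ length s = n.
Proof.
  intros hm. induction n as [|n IH]; intros j hj s.
  - unfold Nseq in hj; simpl in hj. assert (j = 0%nat) by lia. subst j s. simpl.
    unfold pend, cnt; simpl. split; [|split; [lia|reflexivity]]. intros r.
    pose proof (Nseq_pos m (0 + 1 + r - m) hm). simpl in *. lia.
  - rewrite Nseq_S in hj by lia.
    destruct (Nat.lt_ge_cases j (Nseq m n)) as [Hlo|Hhi].
    + subst s. rewrite Svec_nth_lo by lia. destruct (IH j Hlo) as [H1 [H2 H3]].
      set (s0 := nth j (Svec m n) []) in *.
      rewrite pend_app, length_app, H3.
      destruct (j <? Nseq m (S n - m))%nat eqn:E;
      rewrite ?cnt_same, ?cnt_diff by discriminate; unfold pstep.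
      * apply Nat.ltb_lt in E. assert (P0 : (pend m s0 <= 0)%nat)
          by (apply H1; replace (n+1+0-m)%nat with (S n - m)%nat by lia; lia).
        split; [|split]. 3: simpl; lia. 2: lia. intros r.
        pose proof (Nseq_mono m (S n - m) (S n + 1 + r - m) hm ltac:(lia)). lia.
      * apply Nat.ltb_ge in E. assert (P0 : ~ (pend m s0 <= 0)%nat).
        { rewrite H1. replace (n+1+0-m)%nat with (S n - m)%nat by lia. lia. }
        split; [|split; simpl; lia]. intros r.
        replace (S n + 1 + r - m)%nat with (n + 1 + S r - m)%nat by lia.
        rewrite <- (H1 (S r)). lia.
    + subst s. destruct (IH (j - Nseq m n)%nat) as [H1 [H2 H3]].
      { pose proof (Nseq_mono m (S n - m) n hm ltac:(lia)). lia. }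
      replace j with (Nseq m n + (j - Nseq m n))%nat by lia.
      rewrite Svec_nth_hi by lia.
      set (s0 := nth (j - Nseq m n) (Svec m n) []) in *.
      rewrite pend_app, length_app, H3, !cnt_same, !cnt_diff by discriminate. unfold pstep.
      assert (P0 : (pend m s0 <= 0)%nat)
          by (apply H1; replace (n+1+0-m)%nat with (S n - m)%nat by lia; lia).
      split; [|split; simpl; lia]. intros r. destruct (Nat.le_gt_cases (m-1) r).
      * pose proof (Nseq_mono m (S n) (S n + 1 + r - m) hm ltac:(lia)).
        rewrite Nseq_S in H0 by lia. lia.
      * pose proof (Nseq_mono m (S n + 1 + r - m) n hm ltac:(lia)). lia.
Qed.

Lemma Svec_props m n s : (1 <= m)%nat -> In s (Svec m n) ->
  (pend m s <= m - 1)%nat /\ (cnt Star s + pend m s = (m - 1) * cnt Minus s)%nat /\ length s = n.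
Proof.
  intros hm Hin. apply (In_nth _ _ []) in Hin. destruct Hin as [j [Hj Hs]].
  rewrite Svec_len in Hj by lia. destruct (Inv m n hm j Hj) as [H1 [H2 H3]].
  rewrite Hs in *. split; auto. apply H1. replace (n + 1 + (m-1) - m)%nat with n by lia. auto.
Qed.

Lemma cnt_total s : (cnt Plus s + cnt Minus s + cnt Star s)%nat = length s.
Proof.
  induction s as [|x s IH]; [reflexivity|]. unfold cnt in *; simpl.
  destruct x; simpl; lia.
Qed.

Lemma mapi_In {A B} (f : nat -> A -> B) i l y : In y (mapi_aux f i l) ->
  exists k x, In x l /\ y = f k x.
Proof.
  revert i; induction l as [|x l IH]; intros i H; simpl in H. contradiction.
  destruct H as [H|H]. exists i, x. split; auto. left; auto.
  destruct (IH _ H) as [k [z [Hz Hy]]]. exists k, z. split; auto. right; auto.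
Qed.

Lemma mapi_NoDup (g : nat -> sym) i l : NoDup l ->
  NoDup (mapi_aux (fun j s => s ++ [g j]) i l).
Proof.
  revert i; induction l as [|x l IH]; intros i H; simpl. constructor.
  inversion H; subst. constructor; auto.
  intros Hin. apply mapi_In in Hin. destruct Hin as [k [z [Hz E]]].
  apply app_inj_tail in E. destruct E; subst; contradiction.
Qed.

Lemma Svec_NoDup m n : NoDup (Svec m n).
Proof.
  induction n as [|n IH]; simpl. repeat constructor; simpl; auto.
  apply NoDup_app.
  - apply mapi_NoDup; auto.
  - apply NoDup_map_NoDup_ForallPairs. intros a b _ _ E. apply app_inj_tail in E; tauto.
    apply (NoDup_app_remove_r _ (skipn (Nshift m (S n)) (Svec m n))).
    rewrite firstn_skipn; auto.
  - intros y H1 H2. apply mapi_In in H1. destruct H1 as [k [z [_ E1]]].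
    apply in_map_iff in H2. destruct H2 as [w [E2 _]]. subst y.
    apply app_inj_tail in E2. destruct E2 as [_ E2].
    destruct (k <? Nshift m (S n))%nat; discriminate.
Qed.

Definition K m n := map (cnt Minus) (Svec m n).

Lemma mapi_cnt (g : nat -> sym) i l : (forall j, g j <> Minus) ->
  map (cnt Minus) (mapi_aux (fun j s => s ++ [g j]) i l) = map (cnt Minus) l.
Proof.
  intros Hg. revert i; induction l as [|x l IH]; intros i; simpl; auto.
  rewrite cnt_diff by apply Hg. f_equal. apply IH.
Qed.

Lemma K_firstn m k n : (1 <= m)%nat -> (k <= n)%nat ->
  map (cnt Minus) (firstn (Nseq m k) (Svec m n)) = K m k.
Proof.
  intros hm H. induction H.
  - rewrite <- (Svec_len m k hm), firstn_all. reflexivity.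
  - simpl. rewrite firstn_app, mapi_len, Svec_len by lia.
    replace (Nseq m k - Nseq m m0)%nat with 0%nat by (pose proof (Nseq_mono m k m0 hm H); lia).
    rewrite app_nil_r, <- IHle, <- !firstn_map.
    rewrite (mapi_cnt (fun j => if (j <? Nshift m (S m0))%nat then Plus else Star) 0 (Svec m m0)).
    2:{ intros j. destruct (j <? _)%nat; discriminate. }
    reflexivity.
Qed.

Lemma K_S m n : (1 <= m)%nat -> K m (S n) = K m n ++ map S (K m (S n - m)).
Proof.
  intros hm. unfold K at 1. simpl. rewrite map_app.
  rewrite (mapi_cnt (fun j => if (j <? Nshift m (S n))%nat then Plus else Star)).
  2:{ intros j. destruct (j <? _)%nat; discriminate. }
  f_equal. rewrite map_map.
  rewrite (map_ext _ (fun s => S (cnt Minus s))) by (intros; apply cnt_same).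
  rewrite <- map_map. f_equal. rewrite Nshift_eq. rewrite K_firstn by lia. destruct m; [lia|reflexivity].
Qed.

Definition Wsum (u : R) (L : list nat) : R := fold_right (fun k acc => exp (u * INR k) + acc) 0 L.

Lemma Wsum_app u a b : Wsum u (a ++ b) = Wsum u a + Wsum u b.
Proof. induction a; simpl. lra. rewrite IHa; lra. Qed.

Lemma Wsum_mapS u a : Wsum u (map S a) = exp u * Wsum u a.
Proof.
  induction a as [|a l IHa]. simpl; lra.
  change (exp (u * INR (S a)) + Wsum u (map S l) = exp u * (exp (u * INR a) + Wsum u l)).
  rewrite IHa, S_INR, Rmult_plus_distr_l, Rmult_1_r, exp_plus. lra.
Qed.

Lemma Wsum_nonneg u a : 0 <= Wsum u a.
Proof. induction a; simpl. lra. pose proof (exp_pos (u * INR a)). lra. Qed.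

Definition W m u n := Wsum u (K m n).

Lemma W_S m u n : (1 <= m)%nat -> W m u (S n) = W m u n + exp u * W m u (S n - m).
Proof. intros hm. unfold W. rewrite K_S, Wsum_app, Wsum_mapS by lia. reflexivity. Qed.

Lemma W_0 m u : W m u 0 = 1.
Proof. unfold W, K, Wsum. simpl. unfold cnt. simpl. rewrite Rmult_0_r, exp_0. lra. Qed.

Lemma W_mono m u a b : (1 <= m)%nat -> (a <= b)%nat -> W m u a <= W m u b.
Proof.
  intros hm H. induction H. lra. rewrite W_S by lia.
  pose proof (exp_pos u). pose proof (Wsum_nonneg u (K m (S m0 - m))). unfold W in *. nra.
Qed.

Lemma W_pow m u n : (1 <= m)%nat -> W m u n <= (1 + exp u) ^ n.
Proof.
  intros hm. induction n. rewrite W_0. simpl; lra.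
  rewrite W_S by lia. pose proof (W_mono m u (S n - m) n hm ltac:(lia)).
  pose proof (exp_pos u). change ((1+exp u)^(S n)) with ((1+exp u)*(1+exp u)^n). nra.
Qed.

Lemma W_bound m u r : (1 <= m)%nat -> 1 <= r -> r ^ (m - 1) + exp u <= r ^ m ->
  forall n, W m u n <= (1 + exp u) ^ m * r ^ n.
Proof.
  intros hm hr hrm.
  assert (HC : 1 <= (1 + exp u) ^ m).
  { apply pow_R1_Rle. pose proof (exp_pos u); lra. }
  intros n. induction n as [n IH] using (well_founded_induction Wf_nat.lt_wf).
  destruct n as [|n].
  - rewrite W_0. simpl. lra.
  - destruct (Nat.lt_ge_cases (S n) m).
    + eapply Rle_trans. apply W_pow; lia.
      apply Rle_trans with ((1 + exp u) ^ m).
      apply Rle_pow. pose proof (exp_pos u); lra. lia.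
      pose proof (pow_R1_Rle r (S n) hr). nra.
    + rewrite W_S by lia.
      pose proof (IH n ltac:(lia)). pose proof (IH (S n - m)%nat ltac:(lia)).
      assert (E1 : r ^ n = r ^ (S n - m) * r ^ (m - 1)) by (rewrite <- pow_add; f_equal; lia).
      assert (E2 : r ^ (S n) = r ^ (S n - m) * r ^ m) by (rewrite <- pow_add; f_equal; lia).
      assert (0 < r ^ (S n - m)) by (apply pow_lt; lra).
      pose proof (exp_pos u).
      apply Rle_trans with ((1 + exp u) ^ m * r ^ n + exp u * ((1 + exp u) ^ m * r ^ (S n - m))).
      nra. rewrite E1, E2.
      assert (r ^ (S n - m) * (r ^ (m - 1) + exp u) <= r ^ (S n - m) * r ^ m) by nra.
      nra.
Qed.

Lemma chernoff (q : nat -> bool) u c (l : list (list sym)) : 0 <= c ->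
  (forall k, q k = true -> 1 <= exp (u * INR k) * c) ->
  INR (length (filter (fun s => q (cnt Minus s)) l)) <= c * Wsum u (map (cnt Minus) l).
Proof.
  intros Hc Hq. induction l as [|s l IH]; simpl. lra.
  destruct (q (cnt Minus s)) eqn:E.
  - simpl length. rewrite S_INR. specialize (Hq _ E). nra.
  - pose proof (exp_pos (u * INR (cnt Minus s))). nra.
Qed.

Lemma N_lower (k : nat) phi : 1 < phi -> phi ^ (S k) = phi ^ k + 1 ->
  forall n, phi ^ n <= INR (Nseq (S k) n).
Proof.
  intros hphi hroot n.
  induction n as [n IH] using (well_founded_induction Wf_nat.lt_wf).
  destruct n as [|n]. unfold Nseq; simpl; lra.
  rewrite Nseq_S, plus_INR by lia.
  pose proof (IH n ltac:(lia)). pose proof (IH (S n - S k)%nat ltac:(lia)).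
  destruct (Nat.le_gt_cases (S k) (S n)).
  - assert (E : phi ^ (S n) = phi ^ (S n - S k) * phi ^ (S k)) by (rewrite <- pow_add; f_equal; lia).
    assert (E2 : phi ^ n = phi ^ (S n - S k) * phi ^ k) by (rewrite <- pow_add; f_equal; lia).
    rewrite E, hroot. rewrite E2 in H. nra.
  - replace (S n - S k)%nat with 0%nat by lia. unfold Nseq at 2; simpl.
    assert (phi ^ n <= phi ^ k) by (apply Rle_pow; lia || lra).
    change (phi ^ S n) with (phi * phi ^ n). change (phi ^ S k) with (phi * phi ^ k) in hroot.
    nra.
Qed.

Lemma exp_pow' x n : exp (x * INR n) = exp x ^ n.
Proof.
  induction n. simpl. rewrite Rmult_0_r, exp_0. reflexivity.
  rewrite S_INR, Rmult_plus_distr_l, Rmult_1_r, exp_plus, IHn. simpl. ring.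
Qed.

Lemma split_len {A} (p q1 q2 : A -> bool) l :
  (forall x, In x l -> p x = false -> q1 x = true \/ q2 x = true) ->
  (length l <= length (filter p l) + length (filter q1 l) + length (filter q2 l))%nat.
Proof.
  induction l as [|x l IH]; intros H; simpl. lia.
  assert (IH' := IH (fun y Hy => H y (or_intror Hy))).
  destruct (p x) eqn:E1; destruct (q1 x) eqn:E2; destruct (q2 x) eqn:E3; simpl; try lia.
  destruct (H x (or_introl eq_refl) E1); congruence.
Qed.

Lemma rabs_betw x d : Rabs x <= d -> - d <= x <= d.
Proof. unfold Rabs; destruct Rcase_abs; lra. Qed.

Lemma good_close k eps d pm n s p :
  length s = n -> (0 < n)%nat -> (cnt Star s + p = k * cnt Minus s)%nat -> (p <= k)%nat ->
  (cnt Plus s + cnt Minus s + cnt Star s)%nat = length s ->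
  (INR k + 1) * d <= eps / 2 -> 0 < eps ->
  INR k / INR n <= eps / 2 ->
  Rabs (INR (cnt Minus s) / INR n - pm) <= d ->
  good_dec pm (1 - INR (S k) * pm) ((INR (S k) - 1) * pm) eps s = true.
Proof.
  intros Hlen Hn Hst Hp Htot Hd Heps Hkn Hcl.
  assert (Hn' : 0 < INR n) by (apply lt_0_INR; lia).
  set (X := INR (cnt Minus s) / INR n) in *.
  assert (HS : INR (cnt Star s) / INR n = INR k * X - INR p / INR n).
  { apply (f_equal INR) in Hst. rewrite plus_INR, mult_INR in Hst. unfold X. field_simplify; try lra.
    f_equal. lra. }
  assert (HP : INR (cnt Plus s) / INR n = 1 - (INR k + 1) * X + INR p / INR n).
  { rewrite Hlen in Htot. apply (f_equal INR) in Htot. rewrite !plus_INR in Htot.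
    apply (f_equal INR) in Hst. rewrite plus_INR, mult_INR in Hst. unfold X. field_simplify; try lra.
    f_equal. lra. }
  assert (Hpn : 0 <= INR p / INR n <= eps / 2).
  { split. unfold Rdiv. apply Rmult_le_pos. apply pos_INR. left; apply Rinv_0_lt_compat; auto.
    apply Rle_trans with (INR k / INR n); auto. unfold Rdiv. apply Rmult_le_compat_r.
    left; apply Rinv_0_lt_compat; auto. apply le_INR; auto. }
  assert (Hk0 : 0 <= INR k) by apply pos_INR.
  apply rabs_betw in Hcl. destruct Hcl as [Hc1 Hc2].
  assert (Hd0 : 0 <= d) by lra.
  assert (E1 : Rabs (Pfreq Minus s - pm) <= eps).
  { unfold Pfreq. rewrite Hlen. fold (cnt Minus s). fold X. apply Rabs_le. nra. }
  assert (E2 : Rabs (Pfreq Plus s - (1 - INR (S k) * pm)) <= eps).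
  { unfold Pfreq. rewrite Hlen. fold (cnt Plus s). rewrite HP, S_INR. apply Rabs_le. nra. }
  assert (E3 : Rabs (Pfreq Star s - (INR (S k) - 1) * pm) <= eps).
  { unfold Pfreq. rewrite Hlen. fold (cnt Star s). rewrite HS, S_INR. apply Rabs_le. nra. }
  unfold good_dec. destruct Rle_dec; [|contradiction]. destruct Rle_dec; [|contradiction].
  destruct Rle_dec; [reflexivity|contradiction].
Qed.

Lemma tail_hi (k : nat) phi pm d b u : 1 < phi -> phi ^ (S k) = phi ^ k + 1 ->
  0 < u -> b < pm + d ->
  (phi * exp (b * u)) ^ k + exp u <= (phi * exp (b * u)) ^ (S k) -> 1 <= phi * exp (b * u) ->
  forall n, INR (length (filter (fun s => (fun kk => if Rle_dec ((pm + d) * INR n) (INR kk) then true else false) (cnt Minus s)) (Svec (S k) n)))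
    <= (1 + exp u) ^ (S k) * (exp (u * (b - (pm + d)))) ^ n * INR (Nseq (S k) n).
Proof.
  intros hphi hr hu hb Hg Hr n.
  eapply Rle_trans. apply (chernoff (fun kk => if Rle_dec ((pm + d) * INR n) (INR kk) then true else false) u (exp (- u * (pm + d) * INR n))).
  left; apply exp_pos.
  { intros kk E. destruct Rle_dec as [H|H]; [|discriminate]. rewrite <- exp_plus.
    rewrite <- exp_0. apply exp_le_3 || (destruct (Req_dec 0 (u * INR kk + - u * (pm + d) * INR n)) as [E0|E0];
      [rewrite <- E0; lra| left; apply exp_increasing; nra]). }
  fold (K (S k) n). fold (W (S k) u n).
  pose proof (W_bound (S k) u (phi * exp (b * u)) ltac:(lia) Hr) as HW.
  replace (S k - 1)%nat with k in HW by lia. specialize (HW Hg n).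
  pose proof (N_lower k phi hphi hr n) as HN.
  rewrite exp_pow' in *.
  assert (E : exp (u * (b - (pm + d))) ^ n * phi ^ n = exp (- u * (pm + d)) ^ n * (phi * exp (b * u)) ^ n).
  { replace (exp (u * (b - (pm + d)))) with (exp (- u * (pm + d)) * exp (b * u))
      by (rewrite <- exp_plus; f_equal; ring).
    rewrite !Rpow_mult_distr. ring. }
  assert (0 < exp (- u * (pm + d)) ^ n) by (apply pow_lt, exp_pos).
  assert (0 < exp (u * (b - (pm + d))) ^ n) by (apply pow_lt, exp_pos).
  assert (0 < (1 + exp u) ^ S k) by (apply pow_lt; pose proof (exp_pos u); lra).
  apply Rle_trans with (exp (- u * (pm + d)) ^ n * ((1 + exp u) ^ S k * (phi * exp (b * u)) ^ n)).
  apply Rmult_le_compat_l; lra.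
  replace (exp (- u * (pm + d)) ^ n * ((1 + exp u) ^ S k * (phi * exp (b * u)) ^ n))
    with ((1 + exp u) ^ S k * (exp (u * (b - (pm + d))) ^ n * phi ^ n)) by (rewrite E; ring).
  rewrite Rmult_assoc. apply Rmult_le_compat_l. lra. apply Rmult_le_compat_l; lra.
Qed.

Lemma tail_lo (k : nat) phi pm d b u : 1 < phi -> phi ^ (S k) = phi ^ k + 1 ->
  u < 0 -> pm - d < b ->
  (phi * exp (b * u)) ^ k + exp u <= (phi * exp (b * u)) ^ (S k) -> 1 <= phi * exp (b * u) ->
  forall n, INR (length (filter (fun s => (fun kk => if Rle_dec (INR kk) ((pm - d) * INR n) then true else false) (cnt Minus s)) (Svec (S k) n)))
    <= (1 + exp u) ^ (S k) * (exp (u * (b - (pm - d)))) ^ n * INR (Nseq (S k) n).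
Proof.
  intros hphi hr hu hb Hg Hr n.
  eapply Rle_trans. apply (chernoff (fun kk => if Rle_dec (INR kk) ((pm - d) * INR n) then true else false) u (exp (- u * (pm - d) * INR n))).
  left; apply exp_pos.
  { intros kk E. destruct Rle_dec as [H|H]; [|discriminate]. rewrite <- exp_plus.
    rewrite <- exp_0. apply exp_le_3 || (destruct (Req_dec 0 (u * INR kk + - u * (pm - d) * INR n)) as [E0|E0];
      [rewrite <- E0; lra| left; apply exp_increasing; nra]). }
  fold (K (S k) n). fold (W (S k) u n).
  pose proof (W_bound (S k) u (phi * exp (b * u)) ltac:(lia) Hr) as HW.
  replace (S k - 1)%nat with k in HW by lia. specialize (HW Hg n).
  pose proof (N_lower k phi hphi hr n) as HN.
  rewrite exp_pow' in *.
  assert (E : exp (u * (b - (pm - d))) ^ n * phi ^ n = exp (- u * (pm - d)) ^ n * (phi * exp (b * u)) ^ n).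
  { replace (exp (u * (b - (pm - d)))) with (exp (- u * (pm - d)) * exp (b * u))
      by (rewrite <- exp_plus; f_equal; ring).
    rewrite !Rpow_mult_distr. ring. }
  assert (0 < exp (- u * (pm - d)) ^ n) by (apply pow_lt, exp_pos).
  assert (0 < exp (u * (b - (pm - d))) ^ n) by (apply pow_lt, exp_pos).
  assert (0 < (1 + exp u) ^ S k) by (apply pow_lt; pose proof (exp_pos u); lra).
  apply Rle_trans with (exp (- u * (pm - d)) ^ n * ((1 + exp u) ^ S k * (phi * exp (b * u)) ^ n)).
  apply Rmult_le_compat_l; lra.
  replace (exp (- u * (pm - d)) ^ n * ((1 + exp u) ^ S k * (phi * exp (b * u)) ^ n))
    with ((1 + exp u) ^ S k * (exp (u * (b - (pm - d))) ^ n * phi ^ n)) by (rewrite E; ring).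
  rewrite Rmult_assoc. apply Rmult_le_compat_l. lra. apply Rmult_le_compat_l; lra.
Qed.

Theorem theorem2 (m : nat) (hm : (1 <= m)%nat) (phi : R)
  (hphi1 : 1 < phi) (hphi2 : phi <= 2)
  (hroot : phi ^ m - phi ^ (m - 1) - 1 = 0)
  (eps : R) (heps0 : 0 < eps) (heps1 : eps < 1) :
  let pm := (phi - 1) / (1 + INR m * (phi - 1)) in
  let ps := (INR m - 1) * pm in
  let pp := 1 - INR m * pm in
  Un_cv (fun n => INR (count_good m n pm pp ps eps) / INR (Nseq m n)) 1.
Proof.
  intros pm ps pp.
  destruct m as [|k]; [lia|].
  assert (hr : phi ^ S k = phi ^ k + 1).
  { replace (S k - 1)%nat with k in hroot by lia. lra. }
  assert (Hpk0 : 0 < phi ^ k) by (apply pow_lt; lra).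
  assert (HM : INR (S k) = INR k + 1) by apply S_INR.
  assert (Hk0 : 0 <= INR k) by apply pos_INR.
  assert (Hpm : pm = 1 / (phi ^ k + INR (S k))).
  { unfold pm. simpl in hr. rewrite HM.
    assert (0 < 1 + (INR k + 1) * (phi - 1)) by nra.
    field_simplify_eq; [|lra]. nra. }
  assert (Hpm0 : 0 < pm) by (rewrite Hpm; apply Rdiv_lt_0_compat; lra).
  set (d := Rmin (eps / (2 * INR (S k))) (pm / 2)).
  assert (Hd0 : 0 < d).
  { unfold d. apply Rmin_glb_lt. apply Rdiv_lt_0_compat; lra. lra. }
  assert (Hd1 : (INR k + 1) * d <= eps / 2).
  { assert (d <= eps / (2 * INR (S k))) by apply Rmin_l.
    rewrite HM in H. apply Rle_trans with ((INR k + 1) * (eps / (2 * (INR k + 1)))).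
    apply Rmult_le_compat_l; lra. right; field; lra. }
  assert (Hd2 : d <= pm / 2) by apply Rmin_r.
  destruct (tilt k phi (pm + d / 2) hphi1 hr ltac:(lra) ltac:(rewrite <- Hpm; lra))
    as [u1 [Hu1 [_ [Hg1 Hr1]]]].
  specialize (Hu1 ltac:(rewrite <- Hpm; lra)).
  destruct (tilt k phi (pm - d / 2) hphi1 hr ltac:(lra) ltac:(rewrite <- Hpm; lra))
    as [u2 [_ [Hu2 [Hg2 Hr2]]]].
  specialize (Hu2 ltac:(rewrite <- Hpm; lra)).
  pose proof (tail_hi k phi pm d (pm + d / 2) u1 hphi1 hr Hu1 ltac:(lra) Hg1 Hr1) as T1.
  pose proof (tail_lo k phi pm d (pm - d / 2) u2 hphi1 hr Hu2 ltac:(lra) Hg2 Hr2) as T2.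
  set (C1 := (1 + exp u1) ^ S k) in T1.
  set (C2 := (1 + exp u2) ^ S k) in T2.
  set (t1 := exp (u1 * (pm + d / 2 - (pm + d)))) in T1.
  set (t2 := exp (u2 * (pm - d / 2 - (pm - d)))) in T2.
  assert (HC1 : 0 < C1) by (apply pow_lt; pose proof (exp_pos u1); lra).
  assert (HC2 : 0 < C2) by (apply pow_lt; pose proof (exp_pos u2); lra).
  assert (Ht1 : Rabs t1 < 1).
  { unfold t1. rewrite Rabs_pos_eq by (left; apply exp_pos). rewrite <- exp_0.
    apply exp_increasing. nra. }
  assert (Ht2 : Rabs t2 < 1).
  { unfold t2. rewrite Rabs_pos_eq by (left; apply exp_pos). rewrite <- exp_0.
    apply exp_increasing. nra. }
  assert (Key : forall n, (0 < n)%nat -> INR k / INR n <= eps / 2 ->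
     1 - C1 * t1 ^ n - C2 * t2 ^ n <= INR (count_good (S k) n pm pp ps eps) / INR (Nseq (S k) n) <= 1).
  { intros n Hn Hkn.
    assert (HN : 0 < INR (Nseq (S k) n)) by (apply lt_0_INR; pose proof (Nseq_pos (S k) n ltac:(lia)); lia).
    specialize (T1 n). specialize (T2 n).
    unfold count_good. rewrite nodup_fixed_point by (apply NoDup_filter, Svec_NoDup).
    pose proof (split_len (good_dec pm pp ps eps)
      (fun s => if Rle_dec ((pm + d) * INR n) (INR (cnt Minus s)) then true else false)
      (fun s => if Rle_dec (INR (cnt Minus s)) ((pm - d) * INR n) then true else false)
      (Svec (S k) n)) as SL.
    assert (Hfl : (length (filter (good_dec pm pp ps eps) (Svec (S k) n)) <= length (Svec (S k) n))%nat)
      by apply filter_length_le.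
    rewrite Svec_len in SL, Hfl by lia.
    split.
    - assert (HSL : (Nseq (S k) n <= length (filter (good_dec pm pp ps eps) (Svec (S k) n)) +
          length (filter (fun s => if Rle_dec ((pm + d) * INR n) (INR (cnt Minus s)) then true else false) (Svec (S k) n)) +
          length (filter (fun s => if Rle_dec (INR (cnt Minus s)) ((pm - d) * INR n) then true else false) (Svec (S k) n)))%nat).
      { apply SL. intros s Hin Hgood.
        destruct Rle_dec as [H1|H1]; [left; reflexivity|].
        destruct Rle_dec as [H2|H2]; [right; reflexivity|].
        exfalso. destruct (Svec_props (S k) n s ltac:(lia) Hin) as [P1 [P2 P3]].
        replace (S k - 1)%nat with k in * by lia.
        assert (Hn' : 0 < INR n) by (apply lt_0_INR; lia).
        assert (Rabs (INR (cnt Minus s) / INR n - pm) <= d).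
        { apply Rabs_le. split.
          - apply Rle_trans with ((pm - d) * INR n / INR n - pm). right; field; lra.
            unfold Rdiv. apply Rplus_le_compat_r. apply Rmult_le_compat_r.
            left; apply Rinv_0_lt_compat; lra. lra.
          - apply Rle_trans with ((pm + d) * INR n / INR n - pm).
            unfold Rdiv. apply Rplus_le_compat_r. apply Rmult_le_compat_r.
            left; apply Rinv_0_lt_compat; lra. lra. right; field; lra. }
        assert (G := good_close k eps d pm n s (pend (S k) s) P3 Hn P2 P1 (cnt_total s) Hd1 heps0 Hkn H).
        unfold pp, ps in Hgood. rewrite G in Hgood. discriminate. }
      apply le_INR in HSL. rewrite !plus_INR in HSL.
      apply Rle_trans with (1 - (C1 * t1 ^ n * INR (Nseq (S k) n) + C2 * t2 ^ n * INR (Nseq (S k) n)) / INR (Nseq (S k) n)).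
      right; field; lra.
      apply Rle_trans with (1 - (INR (Nseq (S k) n) - INR (length (filter (good_dec pm pp ps eps) (Svec (S k) n)))) / INR (Nseq (S k) n)).
      + apply Rplus_le_compat_l, Ropp_le_contravar. unfold Rdiv. apply Rmult_le_compat_r.
        left; apply Rinv_0_lt_compat; lra. lra.
      + right; field; lra.
    - apply le_INR in Hfl. unfold Rdiv. apply Rle_trans with (INR (Nseq (S k) n) * / INR (Nseq (S k) n)).
      apply Rmult_le_compat_r; auto. left; apply Rinv_0_lt_compat; lra.
      right; field; lra. }
  intros e He.
  destruct (pow_lt_1_zero t1 Ht1 (e / (2 * C1)) ltac:(apply Rdiv_lt_0_compat; lra)) as [N1 HN1].
  destruct (pow_lt_1_zero t2 Ht2 (e / (2 * C2)) ltac:(apply Rdiv_lt_0_compat; lra)) as [N2 HN2].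
  destruct (archimed_cor1 (eps / (2 * INR (S k))) ltac:(apply Rdiv_lt_0_compat; lra)) as [N3 [HN3 HN3']].
  exists (N1 + N2 + N3)%nat. intros n Hn.
  assert (Hn0 : (0 < n)%nat) by lia.
  assert (Hkn : INR k / INR n <= eps / 2).
  { assert (0 < INR N3) by (apply lt_0_INR; lia).
    assert (INR N3 <= INR n) by (apply le_INR; lia).
    assert (/ INR n <= / INR N3) by (apply Rinv_le_contravar; lra).
    apply Rle_trans with ((INR k + 1) * / INR n). unfold Rdiv. apply Rmult_le_compat_r.
    left; apply Rinv_0_lt_compat; lra. lra.
    apply Rle_trans with ((INR k + 1) * (eps / (2 * INR (S k)))).
    apply Rmult_le_compat_l; lra. rewrite HM. right; field; lra. }
  destruct (Key n Hn0 Hkn) as [K1 K2].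
  specialize (HN1 n ltac:(lia)). specialize (HN2 n ltac:(lia)).
  rewrite Rabs_pos_eq in HN1 by (apply pow_le; rewrite Rabs_pos_eq in Ht1; unfold t1 in *; pose proof (exp_pos (u1 * (pm + d / 2 - (pm + d)))); lra).
  rewrite Rabs_pos_eq in HN2 by (apply pow_le; unfold t2 in *; pose proof (exp_pos (u2 * (pm - d / 2 - (pm - d)))); lra).
  assert (C1 * t1 ^ n < e / 2).
  { apply Rlt_le_trans with (C1 * (e / (2 * C1))). apply Rmult_lt_compat_l; lra. right; field; lra. }
  assert (C2 * t2 ^ n < e / 2).
  { apply Rlt_le_trans with (C2 * (e / (2 * C2))). apply Rmult_lt_compat_l; lra. right; field; lra. }
  unfold R_dist. rewrite Rabs_left1 by lra. lra.
Qed.
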